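(* Let $\mathscr{M}$ be a von Neumann algebra. A unitary $U \in \mathscr{M}$ can be written as the product of two symmetries in $\mathscr{M}$ if and only if there is a unitary $W \in \mathscr{M}$ such that $U^* = W^*UW$, i.e. $U$ and $U^*$ are unitarily equivalent in $\mathscr{M}$.
   Context: A symmetry is a self-adjoint unitary. *)

(* Defs.v *)
From HB Require Import structures.
From mathcomp Require Import all_boot all_order all_algebra.
From mathcomp Require Import complex.
From mathcomp Require Import reals.
Set Implicit Arguments. Unset Strict Implicit. Unset Printing Implicit Defensive.
Import Order.TTheory GRing.Theory Num.Theory.
Local Open Scope ring_scope.

Section HilbertDefs.
Variables (R : realType) (H : lmodType R[i]) (ip : H -> H -> R[i]).

Definition hnorm (x : H) : R := Num.sqrt (complex.Re (ip x x)).

Definition hcauchy (u : nat -> H) : Prop :=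
  forall e : R, 0 < e -> exists N : nat,
    forall m n, (N <= m)%N -> (N <= n)%N -> hnorm (u m - u n) < e.

Definition hconverges (u : nat -> H) : Prop :=
  exists x : H, forall e : R, 0 < e -> exists N : nat,
    forall n, (N <= n)%N -> hnorm (u n - x) < e.

Definition is_hilbert_space : Prop :=
  [/\ (forall (a : R[i]) (x y z : H), ip (a *: x + y) z = a * ip x z + ip y z),
      (forall x y : H, ip y x = conjc (ip x y)),
      (forall x : H, 0 <= ip x x),
      (forall x : H, ip x x = 0 -> x = 0) &
      (forall u : nat -> H, hcauchy u -> hconverges u)].

Definition is_bounded_op (T : H -> H) : Prop :=
  (forall (a : R[i]) (x y : H), T (a *: x + y) = a *: T x + T y) /\
  exists C : R, forall x : H, hnorm (T x) <= C * hnorm x.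

Definition is_adjoint (T T' : H -> H) : Prop :=
  forall x y : H, ip (T x) y = ip x (T' y).

Definition commutant (S : (H -> H) -> Prop) : (H -> H) -> Prop :=
  fun T => is_bounded_op T /\ forall A, S A -> T \o A = A \o T.

Definition is_von_neumann_algebra (M : (H -> H) -> Prop) : Prop :=
  (forall T, M T -> is_bounded_op T /\ exists T', is_adjoint T T' /\ M T') /\
  (forall T, M T <-> commutant (commutant M) T).

Definition op_unitary (U : H -> H) : Prop :=
  is_bounded_op U /\
  exists U', is_adjoint U U' /\ U' \o U = id /\ U \o U' = id.

Definition op_symmetry (S : H -> H) : Prop :=
  op_unitary S /\ is_adjoint S S.

End HilbertDefs.

(* Main.v *)
Require Import Defs.
From HB Require Import structures.
From mathcomp Require Import all_boot all_order all_algebra.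
From mathcomp Require Import complex.
From mathcomp Require Import reals.
From mathcomp Require Import ring lra.
From Stdlib Require Import ClassicalEpsilon Classical FunctionalExtensionality.
Import Order.TTheory GRing.Theory Num.Theory.
Set Implicit Arguments. Unset Strict Implicit. Unset Printing Implicit Defensive.
Local Open Scope ring_scope.
Local Open Scope complex_scope.

Ltac csolve := apply/eqP; rewrite eq_complex /=; apply/andP; split; apply/eqP; ring.

Lemma zm1 (V : zmodType) (x t s a : V) : t + t = x - a + s -> x - t - (t - s) = a.
Proof.
move=> e; rewrite opprB addrAC -addrA -(addrA s).
rewrite -opprD e (addrC _ s) opprD (addrA s) subrr add0r opprB.
exact: subrKC.
Qed.

Section Z.
Variable V : zmodType.
Implicit Types a b c n p q x : V.
Lemma zm2 a b c : a - b - (a - c) = c - b.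
Proof. by rewrite opprB addrAC -addrA addrA subrKC. Qed.
Lemma zm3 n a : (n + a) - (n - a) = a + a.
Proof. by rewrite opprB (addrC n a) -addrA subrKC. Qed.
Lemma zm3' n a : (n + a) + (n - a) = n + n.
Proof. by rewrite addrACA subrr addr0. Qed.
Lemma zm4 p q x : p + q + (x - p - q) = x.
Proof. by rewrite -(addrA x) -opprD subrKC. Qed.
Lemma zm5 a b : a - b - (a - b) = 0.
Proof. by rewrite subrr. Qed.
Lemma zm6 x p : x - (x - p) = p.
Proof. by rewrite opprB addrC subrK. Qed.
End Z.

Section Hilb.
Variables (R : realType) (H : lmodType R[i]) (ip : H -> H -> R[i]).
Hypothesis hH : is_hilbert_space ip.

Lemma ip_lin a x y z : ip (a *: x + y) z = a * ip x z + ip y z.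
Proof. by case: hH. Qed.
Lemma ip_conj x y : ip y x = conjc (ip x y).
Proof. by case: hH. Qed.
Lemma ip_ge0 x : 0 <= ip x x.
Proof. by case: hH. Qed.
Lemma ip_def x : ip x x = 0 -> x = 0.
Proof. by case: hH => _ _ _ h _; apply: h. Qed.
Lemma ip_complete u : hcauchy ip u -> hconverges ip u.
Proof. by case: hH => _ _ _ _ h; apply: h. Qed.

Lemma conjD (a b : R[i]) : conjc (a + b) = conjc a + conjc b.
Proof. by case: a; case: b => *; csolve. Qed.
Lemma conjM (a b : R[i]) : conjc (a * b) = conjc a * conjc b.
Proof. by case: a; case: b => *; csolve. Qed.
Lemma conjN (a : R[i]) : conjc (- a) = - conjc a.
Proof. by case: a => *; csolve. Qed.

Lemma ip0l z : ip 0 z = 0.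
Proof.
have h := ip_lin 1 0 0 z; rewrite scaler0 addr0 mul1r in h.
have : ip 0 z + ip 0 z = ip 0 z + 0 by rewrite addr0 -h.
by move/addrI.
Qed.
Lemma ipDl x y z : ip (x + y) z = ip x z + ip y z.
Proof. by rewrite -(scale1r x) ip_lin mul1r scale1r. Qed.
Lemma ipZl a x z : ip (a *: x) z = a * ip x z.
Proof. by rewrite -(addr0 (a *: x)) ip_lin ip0l addr0. Qed.
Lemma ipNl x z : ip (- x) z = - ip x z.
Proof. by rewrite -scaleN1r ipZl mulN1r. Qed.
Lemma ipBl x y z : ip (x - y) z = ip x z - ip y z.
Proof. by rewrite ipDl ipNl. Qed.
Lemma ip0r z : ip z 0 = 0.
Proof. by rewrite ip_conj ip0l conjc0. Qed.
Lemma ipDr x y z : ip x (y + z) = ip x y + ip x z.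
Proof. by rewrite ip_conj ipDl conjD -!ip_conj. Qed.
Lemma ipZr a x z : ip x (a *: z) = conjc a * ip x z.
Proof. by rewrite ip_conj ipZl conjM -ip_conj. Qed.
Lemma ipNr x z : ip x (- z) = - ip x z.
Proof. by rewrite -scaleN1r ipZr conjN conjc1 mulN1r. Qed.
Lemma ipBr x y z : ip x (y - z) = ip x y - ip x z.
Proof. by rewrite ipDr ipNr. Qed.

Definition nn x := complex.Re (ip x x).

Lemma ipxx x : ip x x = (nn x)%:C.
Proof.
have := ip_ge0 x; rewrite /nn; case: (ip x x) => a b.
by rewrite lecE /= => /andP [/eqP -> _].
Qed.
Lemma nn_ge0 x : 0 <= nn x.
Proof. by have := ip_ge0 x; rewrite ipxx ler0c. Qed.
Lemma nn_eq0 x : nn x = 0 -> x = 0.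
Proof. by move=> h; apply: ip_def; rewrite ipxx h. Qed.
Lemma nn0 : nn 0 = 0.
Proof. by rewrite /nn ip0l. Qed.

Lemma ReD (a b : R[i]) : complex.Re (a + b) = complex.Re a + complex.Re b.
Proof. by case: a; case: b. Qed.
Lemma ReN (a : R[i]) : complex.Re (- a) = - complex.Re a.
Proof. by case: a. Qed.
Lemma ReB (a b : R[i]) : complex.Re (a - b) = complex.Re a - complex.Re b.
Proof. by rewrite ReD ReN. Qed.
Lemma ReJ (a : R[i]) : complex.Re (conjc a) = complex.Re a.
Proof. by case: a. Qed.
Lemma ReRM (r : R) (a : R[i]) : complex.Re (r%:C * a) = r * complex.Re a.
Proof. by case: a => p q /=; ring. Qed.

Lemma nnD x y : nn (x + y) = nn x + nn y + 2 * complex.Re (ip x y).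
Proof.
rewrite /nn ipDl !ipDr !ReD (ip_conj x y) ReJ; ring.
Qed.
Lemma nnB x y : nn (x - y) = nn x + nn y - 2 * complex.Re (ip x y).
Proof.
rewrite /nn ipBl !ipBr !ReB (ip_conj x y) ReJ; ring.
Qed.
Lemma nnZ a x : nn (a *: x) = (complex.Re a ^+ 2 + complex.Im a ^+ 2) * nn x.
Proof.
rewrite /nn ipZl ipZr ipxx; case: a => p q /=; ring.
Qed.
Lemma nnN x : nn (- x) = nn x.
Proof. by rewrite /nn ipNl ipNr opprK. Qed.

Lemma hnormE x : hnorm ip x = Num.sqrt (nn x).
Proof. by []. Qed.
Lemma hnorm_ge0 x : 0 <= hnorm ip x.
Proof. exact: sqrtr_ge0. Qed.
Lemma hnorm_sqr x : hnorm ip x ^+ 2 = nn x.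
Proof. by rewrite hnormE sqr_sqrtr // nn_ge0. Qed.
Lemma hnorm0 : hnorm ip 0 = 0.
Proof. by rewrite hnormE nn0 sqrtr0. Qed.
Lemma hnorm_eq0 x : hnorm ip x = 0 -> x = 0.
Proof. by move=> h; apply: nn_eq0; rewrite -hnorm_sqr h expr0n. Qed.
Lemma hnormN x : hnorm ip (- x) = hnorm ip x.
Proof. by rewrite !hnormE nnN. Qed.
Lemma hnormZ a x : hnorm ip (a *: x) =
  Num.sqrt (complex.Re a ^+ 2 + complex.Im a ^+ 2) * hnorm ip x.
Proof. by rewrite !hnormE nnZ sqrtrM // addr_ge0 // sqr_ge0. Qed.
Lemma hnormZr (r : R) x : hnorm ip (r%:C *: x) = `|r| * hnorm ip x.
Proof. by rewrite hnormZ /= expr0n addr0 sqrtr_sqr. Qed.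

Lemma CS_re x y : complex.Re (ip x y) <= hnorm ip x * hnorm ip y.
Proof.
set a := hnorm ip x; set b := hnorm ip y.
have [a0|apos] := eqVneq a 0.
  by rewrite (hnorm_eq0 a0) ip0l a0 mul0r.
have [b0|bpos] := eqVneq b 0.
  by rewrite (hnorm_eq0 b0) ip0r b0 mulr0.
have ha : 0 < a by rewrite lt_def apos hnorm_ge0.
have hb : 0 < b by rewrite lt_def bpos hnorm_ge0.
have h := nn_ge0 (b%:C *: x - a%:C *: y).
rewrite nnB !nnZ /= expr0n !addr0 ipZl ipZr conjc_real ReRM mulrA ReRM in h.
rewrite -!hnorm_sqr -/a -/b in h.
have hab : 0 < a * b by apply: mulr_gt0.
have : a * b * complex.Re (ip x y) <= a * b * (a * b).
  by nra.
by rewrite ler_pM2l.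
Qed.

Lemma CS_abs x y : `|complex.Re (ip x y)| <= hnorm ip x * hnorm ip y.
Proof.
rewrite ler_norml CS_re andbT lerNl -ReN -ipNr.
by rewrite -(hnormN y) CS_re.
Qed.

Lemma ImE x y : complex.Im (ip x y) = complex.Re (ip x ('i%C *: y)).
Proof. by rewrite ipZr; case: (ip x y) => p q /=; ring. Qed.

Lemma CS_im x y : `|complex.Im (ip x y)| <= hnorm ip x * hnorm ip y.
Proof.
rewrite ImE; have := CS_abs x ('i%C *: y).
by rewrite hnormZ /= expr0n expr1n add0r sqrtr1 mul1r.
Qed.

Lemma hnormD x y : hnorm ip (x + y) <= hnorm ip x + hnorm ip y.
Proof.
rewrite hnormE -(@ger0_norm _ (hnorm ip x + hnorm ip y)); last first.
  by rewrite addr_ge0 // hnorm_ge0.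
rewrite -sqrtr_sqr ler_wsqrtr // nnD -!hnorm_sqr.
have := CS_re x y; nra.
Qed.

Lemma hnormB_sym x y : hnorm ip (x - y) = hnorm ip (y - x).
Proof. by rewrite -hnormN opprB. Qed.

Lemma hnormB3 x y z : hnorm ip (x - z) <= hnorm ip (x - y) + hnorm ip (y - z).
Proof. by have := hnormD (x - y) (y - z); rewrite addrA subrK. Qed.


Notation hn := (hnorm ip).

Definition cvg_to (u : nat -> H) (l : H) :=
  forall e : R, 0 < e -> exists N, forall n, (N <= n)%N -> hn (u n - l) < e.

Lemma small0 (a : R) : 0 <= a -> (forall e, 0 < e -> a < e) -> a = 0.
Proof.
move=> a0 h; apply/eqP; rewrite eq_le a0 andbT; apply/negP => /negP.
by rewrite -ltNge => /h; rewrite ltxx.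
Qed.

Lemma le_small (a c : R) : (forall e, 0 < e -> a <= c + e) -> a <= c.
Proof.
move=> h; rewrite leNgt; apply/negP => ac.
have := h ((a - c) / 2%:R); rewrite divr_gt0 ?subr_gt0 // ?ltr0n // => /(_ isT).
lra.
Qed.

Lemma hn_small x : (forall e, 0 < e -> hn x < e) -> x = 0.
Proof. by move=> h; apply: hnorm_eq0; apply: small0 => //; apply: hnorm_ge0. Qed.

Lemma cvg_unique u a b : cvg_to u a -> cvg_to u b -> a = b.
Proof.
move=> ha hb; apply/eqP; rewrite -subr_eq0; apply/eqP; apply: hn_small => e e0.
have e2 : 0 < e / 2%:R by rewrite divr_gt0 // ltr0n.
case: (ha _ e2) => N1 h1; case: (hb _ e2) => N2 h2.
have := hnormB3 a (u (maxn N1 N2)) b.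
rewrite (hnormB_sym a (u _)).
have := h1 (maxn N1 N2) (leq_maxl _ _); have := h2 (maxn N1 N2) (leq_maxr _ _).
lra.
Qed.

Definition hlim (u : nat -> H) : H := epsilon (inhabits 0) (cvg_to u).

Lemma hlimP u l : cvg_to u l -> cvg_to u (hlim u).
Proof. by move=> h; apply: (epsilon_spec (inhabits 0) (cvg_to u)); exists l. Qed.
Lemma hlimE u l : cvg_to u l -> hlim u = l.
Proof. by move=> h; apply: (cvg_unique (hlimP h) h). Qed.
Lemma cauchy_cvg u : hcauchy ip u -> cvg_to u (hlim u).
Proof. by move=> /ip_complete [l hl]; apply: (hlimP (l := l)). Qed.

Lemma cvg_const c : cvg_to (fun _ => c) c.
Proof. by move=> e e0; exists 0%N => n _; rewrite subrr hnorm0. Qed.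

Lemma cvg_ext u v a : (forall n, u n = v n) -> cvg_to u a -> cvg_to v a.
Proof. by move=> h hu e e0; case: (hu e e0) => N hN; exists N => n /hN; rewrite h. Qed.

Lemma cvgD u v a b : cvg_to u a -> cvg_to v b ->
  cvg_to (fun n => u n + v n) (a + b).
Proof.
move=> ha hb e e0.
have e2 : 0 < e / 2%:R by rewrite divr_gt0 // ltr0n.
case: (ha _ e2) => N1 h1; case: (hb _ e2) => N2 h2.
exists (maxn N1 N2) => n hn0.
have := h1 n (leq_trans (leq_maxl _ _) hn0); have := h2 n (leq_trans (leq_maxr _ _) hn0).
have -> : u n + v n - (a + b) = (u n - a) + (v n - b).
  by rewrite opprD addrACA.
have := hnormD (u n - a) (v n - b); lra.
Qed.

Lemma cvg_small u a (K : R) : cvg_to u a -> 0 <= K ->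
  forall e, 0 < e -> exists N, forall n, (N <= n)%N -> hn (u n - a) * K < e.
Proof.
move=> ha K0 e e0.
have eK : 0 < e / (K + 1) by rewrite divr_gt0 // ltr_wpDl.
case: (ha _ eK) => N hN; exists N => n /hN h.
have K1 : 0 < K + 1 by rewrite ltr_wpDl.
have : hn (u n - a) * (K + 1) < e by rewrite -ltr_pdivlMr.
have := hnorm_ge0 (u n - a); nra.
Qed.

Lemma cvg_op T c u a : (forall x, hn (T x) <= c * hn x) ->
  (forall x y, T (x - y) = T x - T y) ->
  cvg_to u a -> cvg_to (fun n => T (u n)) (T a).
Proof.
move=> hb hl ha e e0.
have c0 : 0 <= `|c| by [].
case: (cvg_small ha c0 e0) => N hN; exists N => n /hN h.
rewrite -hl; apply: le_lt_trans (hb _) _.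
rewrite mulrC; apply: le_lt_trans h; apply: ler_wpM2l; first exact: hnorm_ge0.
exact: ler_norm.
Qed.

Lemma cvgZ k u a : cvg_to u a -> cvg_to (fun n => k *: u n) (k *: a).
Proof.
apply: (@cvg_op (fun x => k *: x) (Num.sqrt (complex.Re k ^+ 2 + complex.Im k ^+ 2))).
  by move=> x; rewrite hnormZ.
by move=> x y; rewrite scalerBr.
Qed.

Lemma cvgN u a : cvg_to u a -> cvg_to (fun n => - u n) (- a).
Proof.
move=> h; have h2 := cvgZ (-1) h; rewrite scaleN1r in h2.
by apply: cvg_ext h2 => n; rewrite scaleN1r.
Qed.
Lemma cvgB u v a b : cvg_to u a -> cvg_to v b ->
  cvg_to (fun n => u n - v n) (a - b).
Proof. by move=> ha hb; apply: cvgD ha (cvgN hb). Qed.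

Lemma cvg_sub u a f : cvg_to u a -> (forall n, (n <= f n)%N) ->
  cvg_to (fun n => u (f n)) a.
Proof.
by move=> ha hf e e0; case: (ha e e0) => N hN; exists N => n hn0;
  apply: hN; apply: leq_trans hn0 (hf n).
Qed.

Lemma cvg_le u a c : cvg_to u a -> (forall n, hn (u n) <= c) -> hn a <= c.
Proof.
move=> ha hc; apply: le_small => e e0.
case: (ha e e0) => N /(_ N (leqnn N)) h.
have := hnormD (u N) (a - u N); rewrite addrC subrK.
rewrite hnormB_sym; have := hc N; lra.
Qed.

Lemma cvg_ip u v a b x y : cvg_to u a -> cvg_to v b ->
  (forall n, ip (u n) y = ip x (v n)) -> ip a y = ip x b.
Proof.
move=> ha hb h.
set z := ip a y - ip x b.
have hz n : z = ip (a - u n) y - ip x (b - v n).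
  by rewrite ipBl ipBr h /z; ring.
have key : forall f : R[i] -> R,
  (forall p q, `|f (ip p q)| <= hn p * hn q) ->
  (forall s t, f (s - t) = f s - f t) -> f z = 0.
  move=> f hf fB; apply/eqP; rewrite -normr_eq0; apply/eqP; apply: small0 => // e e0.
  have e2 : 0 < e / 2%:R by rewrite divr_gt0 // ltr0n.
  case: (cvg_small ha (hnorm_ge0 y) e2) => N1 h1.
  case: (cvg_small hb (hnorm_ge0 x) e2) => N2 h2.
  set n := maxn N1 N2.
  have := h1 n (leq_maxl _ _); have := h2 n (leq_maxr _ _).
  rewrite (hz n) fB.
  have := hf (a - u n) y; have := hf x (b - v n).
  rewrite (hnormB_sym a) (hnormB_sym b).
  have := ler_normB (f (ip (a - u n) y)) (f (ip x (b - v n))).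
  nra.
have hre := key (@complex.Re R) (fun p q => CS_abs p q) (@ReB).
have him := key (@complex.Im R) (fun p q => CS_im p q).
have : z = 0.
  move: hre him; rewrite /z; case: (ip a y - ip x b) => p q /= -> -> //.
  by move=> s t; case: s; case: t.
by move/eqP; rewrite subr_eq0 => /eqP.
Qed.

Lemma mono_le (w : nat -> R) : (forall n, w n <= w n.+1) ->
  forall m n, (m <= n)%N -> w m <= w n.
Proof.
move=> h m; elim=> [|n IH]; first by rewrite leqn0 => /eqP ->.
rewrite leq_eqVlt => /orP [/eqP -> //|]; rewrite ltnS => /IH.
by move/le_trans; apply.
Qed.

Lemma mono_cauchy (w : nat -> R) b : (forall n, w n <= w n.+1) ->
  (forall n, w n <= b) ->
  forall e, 0 < e -> exists N, forall n, (N <= n)%N -> w n - w N < e.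
Proof.
move=> inc ub e e0; apply: NNPP => hne.
have key : forall N, exists n, (N <= n)%N /\ w N + e <= w n.
  move=> N; apply: NNPP => h2; apply: hne; exists N => n Nn.
  rewrite ltNge; apply/negP => hle; apply: h2; exists n; split => //; lra.
have hk : forall k : nat, exists n, w 0%N + k%:R * e <= w n.
  elim=> [|k [n hn0]]; first by exists 0%N; rewrite mul0r addr0.
  case: (key n) => m [_ hm]; exists m.
  rewrite -addn1 natrD mulrDl mul1r addrA; lra.
have b0 : 0 <= (b - w 0%N) / e by rewrite divr_ge0 ?subr_ge0 ?ub // ltW.
case: (hk (Num.bound ((b - w 0%N) / e))) => n hn0.
have := archi_boundP b0; rewrite ltr_pdivrMr // => hb.
have := ub n; lra.
Qed.

Lemma mono_cauchy2 (w : nat -> R) b : (forall n, w n <= w n.+1) ->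
  (forall n, w n <= b) ->
  forall e, 0 < e -> exists N, forall m n, (N <= m)%N -> (N <= n)%N -> `|w m - w n| < e.
Proof.
move=> inc ub e e0; case: (mono_cauchy inc ub e0) => N hN; exists N => m n hm hn0.
have := hN m hm; have := hN n hn0.
have := mono_le inc hm; have := mono_le inc hn0.
rewrite ltr_norml; move=> *; apply/andP; split; lra.
Qed.

Definition lin (T : H -> H) := forall a x y, T (a *: x + y) = a *: T x + T y.
Definition bnd (T : H -> H) (c : R) := forall x, hn (T x) <= c * hn x.
Definition sadj (T : H -> H) := is_adjoint ip T T.

Section LinFacts.
Variable T : H -> H.
Hypothesis hT : lin T.
Lemma lin0 : T 0 = 0.
Proof.
have h := hT 1 0 0; rewrite scaler0 addr0 scale1r in h.
have : T 0 + T 0 = T 0 + 0 by rewrite addr0 -h.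
by move/addrI.
Qed.
Lemma linD x y : T (x + y) = T x + T y.
Proof. by have := hT 1 x y; rewrite !scale1r. Qed.
Lemma linZ a x : T (a *: x) = a *: T x.
Proof. by have := hT a x 0; rewrite !addr0 lin0 addr0. Qed.
Lemma linN x : T (- x) = - T x.
Proof. by rewrite -scaleN1r linZ scaleN1r. Qed.
Lemma linB x y : T (x - y) = T x - T y.
Proof. by rewrite linD linN. Qed.
End LinFacts.

Lemma ip_ext a b : (forall x, ip x a = ip x b) -> a = b.
Proof.
move=> h; apply/eqP; rewrite -subr_eq0; apply/eqP; apply: ip_def.
by rewrite ipBr h subrr.
Qed.

Lemma adj_unique T A B : is_adjoint ip T A -> is_adjoint ip T B -> A = B.
Proof.
move=> hA hB; apply: functional_extensionality => y; apply: ip_ext => x.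
by rewrite -hA hB.
Qed.

Lemma adj_sym T A : is_adjoint ip T A -> is_adjoint ip A T.
Proof. by move=> h x y; rewrite ip_conj -h -ip_conj. Qed.

Lemma adj_comp A A' B B' : is_adjoint ip A A' -> is_adjoint ip B B' ->
  is_adjoint ip (A \o B) (B' \o A').
Proof. by move=> hA hB x y /=; rewrite hA hB. Qed.

Lemma adj_lin T A : is_adjoint ip T A -> lin A.
Proof.
move=> h a x y; apply: ip_ext => z.
by rewrite -h ipDr ipZr ipDr ipZr -!h.
Qed.

Lemma lim_lin (Ts : nat -> H -> H) T : (forall k, lin (Ts k)) ->
  (forall x, cvg_to (fun k => Ts k x) (T x)) -> lin T.
Proof.
move=> hl hc a x y; apply: (cvg_unique (hc (a *: x + y))).
apply: cvg_ext (cvgD (cvgZ a (hc x)) (hc y)) => n.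
by rewrite hl.
Qed.

Lemma lim_bnd (Ts : nat -> H -> H) T c : (forall k, bnd (Ts k) c) ->
  (forall x, cvg_to (fun k => Ts k x) (T x)) -> bnd T c.
Proof. by move=> hb hc x; apply: cvg_le (hc x) _ => n; apply: hb. Qed.

Lemma lim_sadj (Ts : nat -> H -> H) T : (forall k, sadj (Ts k)) ->
  (forall x, cvg_to (fun k => Ts k x) (T x)) -> sadj T.
Proof. by move=> hs hc x y; apply: cvg_ip (hc x) (hc y) _ => n; apply: hs. Qed.

Lemma lim_comm (Ts : nat -> H -> H) T C c : lin C -> bnd C c ->
  (forall k x, C (Ts k x) = Ts k (C x)) ->
  (forall x, cvg_to (fun k => Ts k x) (T x)) -> forall x, C (T x) = T (C x).
Proof.
move=> hl hb hcom hc x; apply: (cvg_unique _ (hc (C x))).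
apply: cvg_ext (cvg_op hb (linB hl) (hc x)) => n; exact: hcom.
Qed.

Lemma nnle_hn x y : nn x <= nn y -> hn x <= hn y.
Proof. by rewrite !hnormE; apply: ler_wsqrtr. Qed.

Lemma hn_le_nn x y : hn x <= hn y -> nn x <= nn y.
Proof.
move=> h; rewrite -!hnorm_sqr; have := hnorm_ge0 x; have := hnorm_ge0 y; nra.
Qed.

Lemma bnd1_nn T : bnd T 1 -> forall x, nn (T x) <= nn x.
Proof. by move=> h x; apply: hn_le_nn; rewrite -[hn x]mul1r. Qed.

Lemma hn_tri a b : hn a <= hn b + hn (a - b).
Proof. by have := hnormD b (a - b); rewrite addrC subrK. Qed.

Lemma hn_lt (a : H) (e : R) : 0 < e -> nn a < e ^+ 2 -> hn a < e.
Proof.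
move=> e0 h; rewrite ltNge; apply/negP => hle.
have := hnorm_ge0 a; rewrite -hnorm_sqr in h; nra.
Qed.

Lemma Zlem B : sadj B -> bnd B 1 -> forall x, nn (x - B (B x)) <= nn x - nn (B x).
Proof.
move=> hs hb x.
rewrite nnB -(hs x (B x)) -/(nn (B x)).
have := bnd1_nn hb (B x); lra.
Qed.

Lemma lin_id : lin id.
Proof. by []. Qed.

Lemma lin_comp A B : lin A -> lin B -> lin (A \o B).
Proof. by move=> hA hB a x y /=; rewrite hB hA. Qed.

Lemma iter_lin Z k : lin Z -> lin (iter k Z).
Proof.
move=> hZ; elim: k => [//|k IH] a x y /=.
by rewrite IH hZ.
Qed.

Lemma iter_sadj Z k : sadj Z -> sadj (iter k Z).
Proof.
move=> hZ; elim: k => [//|k IH] x y /=.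
by rewrite hZ IH -iterSr.
Qed.

Lemma iter_bnd1 Z k : bnd Z 1 -> bnd (iter k Z) 1.
Proof.
move=> hZ; elim: k => [|k IH] x /=; first by rewrite mul1r.
by apply: le_trans (hZ _) _; rewrite !mul1r -[hn x]mul1r.
Qed.

Lemma iter_comm (Z C : H -> H) k : (forall x, C (Z x) = Z (C x)) ->
  forall x, C (iter k Z x) = iter k Z (C x).
Proof. by move=> h; elim: k => [//|k IH] x /=; rewrite h IH. Qed.

Lemma iter_ip Z a b x : sadj Z ->
  ip (iter a Z x) (iter b Z x) = ip x (iter (a + b) Z x).
Proof. by move=> hZ; rewrite (iter_sadj a hZ) iterD. Qed.

Fixpoint ysum (f : nat -> H) k := match k with 0%N => 0 | k'.+1 => ysum f k' + f k' end.

Lemma kerproj B : sadj B -> bnd B 1 ->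
  exists F, lin F /\ sadj F /\ bnd F 1 /\
     (forall x, B (F x) = 0) /\
     (forall x, B x = 0 -> F x = x) /\
     (forall x, exists y : nat -> H, cvg_to (fun n => B (y n)) (x - F x)) /\
     (forall C c, lin C -> bnd C c -> (forall x, C (B x) = B (C x)) ->
        forall x, C (F x) = F (C x)).
Proof.
move=> hs hb.
have hlB : lin B := adj_lin hs.
pose Z x := x - B (B x).
have hlZ : lin Z.
  by move=> a x y; rewrite /Z !hlB scalerBr opprD addrACA.
have hsZ : sadj Z.
  by move=> x y; rewrite /Z ipBl ipBr !hs.
have hbZ : bnd Z 1.
  move=> x; rewrite mul1r; apply: nnle_hn.
  have := Zlem hs hb x; have := nn_ge0 (B x); rewrite /Z; lra.
have hBZ : forall x, B (Z x) = Z (B x) by move=> x; rewrite /Z linB.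
pose c x k := nn (iter k Z x).
have cdec : forall x k, c x k.+1 <= c x k.
  by move=> x k; apply: hn_le_nn; rewrite /= -[hn (iter k Z x)]mul1r; apply: hbZ.
have cB : forall x k, nn (B (iter k Z x)) <= c x k - c x k.+1.
  by move=> x k; have := Zlem hs hb (iter k Z x); rewrite /c /=; lra.
have ccau : forall x e, 0 < e -> exists N, forall m n, (N <= m)%N -> (N <= n)%N ->
    `|c x m - c x n| < e.
  move=> x e e0.
  have h1 : forall n, - c x n <= - c x n.+1 by move=> n; rewrite lerN2.
  have h2 : forall n, - c x n <= 0 by move=> n; rewrite oppr_le0 /c nn_ge0.
  case: (mono_cauchy2 h1 h2 e0) => N hN; exists N => m n hm hn0.
  by rewrite -normrN opprB; move: (hN m n hm hn0); rewrite opprK addrC.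
have hdiff : forall x n m, nn (iter (n + n) Z x - iter (m + m) Z x) =
    c x (n + n)%N + c x (m + m)%N - 2 * c x (n + m)%N.
  move=> x n m; rewrite nnB iter_ip // /c /nn iter_ip // iter_ip //.
  by rewrite (addnACA n n m m) iter_ip.
have hcau : forall x, hcauchy ip (fun n => iter (n + n) Z x).
  move=> x e e0.
  have e2 : 0 < e ^+ 2 / 4%:R by rewrite divr_gt0 // ?exprn_gt0 // ltr0n.
  case: (ccau x _ e2) => N hN; exists N => m n hm hn0.
  apply: hn_lt => //; rewrite hdiff.
  have h1 := hN (m + m)%N (m + n)%N (leq_trans hm (leq_addr _ _)) (leq_trans hm (leq_addr _ _)).
  have h2 := hN (n + n)%N (m + n)%N (leq_trans hn0 (leq_addr _ _)) (leq_trans hm (leq_addr _ _)).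
  move: h1 h2; rewrite !ltr_norml => /andP [_ h1] /andP [_ h2].
  lra.
pose F x := hlim (fun n => iter (n + n) Z x).
have hcvg : forall x, cvg_to (fun n => iter (n + n) Z x) (F x).
  by move=> x; apply: cauchy_cvg.
have hlF : lin F.
  by apply: (lim_lin (Ts := fun k => iter (k + k) Z)) => // k; apply: iter_lin.
exists F; split; first exact: hlF.
split; [|split; [|split; [|split; [|split]]]].
- by apply: (lim_sadj (Ts := fun k => iter (k + k) Z)) => // k; apply: iter_sadj.
- by apply: (lim_bnd (Ts := fun k => iter (k + k) Z)) => // k; apply: iter_bnd1.
- move=> x; apply: hn_small => e e0.
  have e2 : 0 < e / 2%:R by rewrite divr_gt0 // ltr0n.
  have hc1 := cvg_op hb (linB hlB) (hcvg x).
  case: (hc1 _ e2) => N1 h1.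
  have e4 : 0 < (e / 2%:R) ^+ 2 by rewrite exprn_gt0.
  case: (ccau x _ e4) => N2 h2.
  set n := maxn N1 N2.
  have := h1 n (leq_maxl _ _).
  have hh : hn (B (iter (n + n) Z x)) < e / 2%:R.
    apply: hn_lt => //; apply: le_lt_trans (cB x (n + n)%N) _.
    have := h2 (n + n)%N (n + n).+1 (leq_trans (leq_maxr _ _) (leq_addr _ _))
      (leq_trans (leq_maxr _ _) (leqW (leq_addr _ _))).
    by rewrite ltr_norml => /andP [_ ->].
  have := hn_tri (B (F x)) (B (iter (n + n) Z x)).
  rewrite (hnormB_sym (B (F x))); lra.
- move=> x hx.
  have hZx : forall k, iter k Z x = x.
    by elim=> [//|k IH] /=; rewrite IH /Z hx (lin0 hlB) subr0.
  rewrite /F; apply: hlimE; apply: cvg_ext (cvg_const x) => n; by rewrite hZx.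
- move=> x.
  pose y := ysum (fun j => iter j Z (B x)).
  have hy : forall k, x - iter k Z x = B (y k).
    elim=> [|k IH] /=; first by rewrite subrr (lin0 hlB).
    rewrite (linD hlB) -IH.
    have -> : iter k Z (B x) = B (iter k Z x) by rewrite (iter_comm _ hBZ).
    set v := iter k Z x.
    have -> : Z v = v - B (B v) by [].
    by rewrite opprB (addrC (B (B v))) addrA.
  exists (fun n => y (n + n)%N).
  apply: cvg_ext (cvgB (cvg_const x) (hcvg x)) => n; exact: hy.
- move=> C cc hlC hbC hCB x.
  apply: (lim_comm (Ts := fun k => iter (k + k) Z) hlC hbC _ hcvg x).
  move=> k v; apply: iter_comm => w.
  by rewrite /Z (linB hlC) hCB hCB.
Qed.

Definition hf : R[i] := ((2 : R)^-1)%:C.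

Lemma hf_add (v : H) : hf *: v + hf *: v = v.
Proof.
rewrite -scalerDl.
have -> : hf + hf = 1.
  rewrite /hf; apply/eqP; rewrite eq_complex /= addr0 eqxx andbT.
  by apply/eqP; field.
by rewrite scale1r.
Qed.

Lemma hn_hf (v : H) : hn (hf *: v) = hn v / 2.
Proof. by rewrite hnormZr ger0_norm ?invr_ge0 ?ler0n // mulrC. Qed.

Lemma lin_zero : lin (fun _ => 0).
Proof. by move=> a x y; rewrite scaler0 addr0. Qed.

Lemma lin_add A B : lin A -> lin B -> lin (fun x => A x + B x).
Proof. by move=> hA hB a x y; rewrite hA hB scalerDr addrACA. Qed.

Lemma lin_scale k A : lin A -> lin (fun x => k *: A x).
Proof. by move=> hA a x y; rewrite hA scalerDr !scalerA mulrC. Qed.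

Lemma addK2 (u a b : H) : (u + a) - (u + b) = a - b.
Proof. by rewrite opprD addrACA subrr add0r. Qed.

Fixpoint Tsq (Y : H -> H) k : H -> H :=
  match k with
  | 0%N => fun _ => 0
  | k'.+1 => fun x => hf *: (Y x + Tsq Y k' (Tsq Y k' x))
  end.

Lemma TsS Y k x : Tsq Y k.+1 x = hf *: (Y x + Tsq Y k (Tsq Y k x)).
Proof. by []. Qed.

Fixpoint wsq k : R := match k with 0%N => 0 | k'.+1 => (1 + wsq k' ^+ 2) / 2 end.

Lemma wsq_bd k : 0 <= wsq k <= 1.
Proof.
elim: k => [|k /andP [h0 h1]] /=; first by rewrite lexx ler01.
apply/andP; split.
  by rewrite divr_ge0 // addr_ge0 // sqr_ge0.
rewrite ler_pdivrMr ?ltr0n // mul1r; nra.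
Qed.

Lemma wsq_inc k : wsq k <= wsq k.+1.
Proof.
rewrite /= ler_pdivlMr ?ltr0n //.
have := sqr_ge0 (1 - wsq k); nra.
Qed.

Lemma sqrt_iter Y : sadj Y -> bnd Y 1 ->
  exists T, lin T /\ sadj T /\ bnd T 1 /\ (forall x, T x + T x = Y x + T (T x)) /\
   (forall C c, lin C -> bnd C c -> (forall x, C (Y x) = Y (C x)) ->
      forall x, C (T x) = T (C x)).
Proof.
move=> hs hb; have hlY := adj_lin hs.
have hlT : forall k, lin ((Tsq Y) k).
  elim=> [|k IH]; first exact: lin_zero.
  exact: (lin_scale hf (lin_add hlY (lin_comp IH IH))).
have hsT : forall k, sadj ((Tsq Y) k).
  elim=> [|k IH] x y /=; first by rewrite ip0l ip0r.
  rewrite ipZl ipZr ipDl ipDr hs conjc_real.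
  by rewrite (IH (Tsq Y k x)) IH.
have hbT : forall k, bnd ((Tsq Y) k) (wsq k).
  elim=> [|k IH] x; first by rewrite /= hnorm0 mul0r.
  rewrite TsS hn_hf.
  have h1 := hnormD (Y x) (Tsq Y k (Tsq Y k x)).
  have h2 := hb x; have h3 := IH (Tsq Y k x); have h4 := IH x.
  have := wsq_bd k => /andP [w0 w1].
  have := hnorm_ge0 x; have := hnorm_ge0 (Tsq Y k x).
  rewrite /=; nra.
have hwT : forall k, bnd ((Tsq Y) k) 1.
  move=> k x; apply: le_trans (hbT k x) _; apply: ler_wpM2r; first exact: hnorm_ge0.
  by have := wsq_bd k => /andP [].
have hD : forall k x, hn ((Tsq Y) k.+1 x - (Tsq Y) k x) <= (wsq k.+1 - wsq k) * hn x.
  elim=> [|k IH] x.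
    rewrite /= subr0 addr0 hn_hf; have := hb x; lra.
  have -> : (Tsq Y) k.+2 x - (Tsq Y) k.+1 x =
      hf *: (Tsq Y k.+1 (Tsq Y k.+1 x) - Tsq Y k (Tsq Y k x)).
    transitivity (hf *: (Y x + Tsq Y k.+1 (Tsq Y k.+1 x)) -
                  hf *: (Y x + Tsq Y k (Tsq Y k x))); first by [].
    by rewrite -scalerBr addK2.
  rewrite hn_hf.
  have -> : (Tsq Y k.+1) ((Tsq Y k.+1) x) - (Tsq Y k) ((Tsq Y k) x) = ((Tsq Y k.+1) ((Tsq Y k.+1) x) - (Tsq Y k) ((Tsq Y k.+1) x)) + (Tsq Y k) ((Tsq Y k.+1) x - (Tsq Y k) x).
    by rewrite (linB (hlT k)) addrA subrK.
  have h1 := hnormD ((Tsq Y k.+1) ((Tsq Y k.+1) x) - (Tsq Y k) ((Tsq Y k.+1) x)) ((Tsq Y k) ((Tsq Y k.+1) x - (Tsq Y k) x)).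
  have h2 := IH ((Tsq Y k.+1) x); have h3 := hbT k ((Tsq Y k.+1) x - (Tsq Y k) x); have h4 := IH x.
  have h5 := hbT k.+1 x.
  have := wsq_bd k => /andP [w0 w1]; have := wsq_bd k.+1 => /andP [w0' w1'].
  have := wsq_inc k; have := hnorm_ge0 x; have := hnorm_ge0 ((Tsq Y k.+1) x).
  have := hnorm_ge0 ((Tsq Y k.+1) x - (Tsq Y k) x).
  have e1 : wsq k.+2 - wsq k.+1 = (wsq k.+1 - wsq k) * (wsq k.+1 + wsq k) / 2.
    by rewrite [wsq k.+2]/= [wsq k.+1]/=; field.
  rewrite e1.
  move=> *; nra.
have hTel : forall n m x, (n <= m)%N -> hn ((Tsq Y) m x - (Tsq Y) n x) <= (wsq m - wsq n) * hn x.
  move=> n; elim=> [|m IH] x.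
    by rewrite leqn0 => /eqP ->; rewrite !subrr hnorm0 mul0r.
  rewrite leq_eqVlt => /orP [/eqP ->|]; first by rewrite !subrr hnorm0 mul0r.
  rewrite ltnS => /IH h.
  have := hnormB3 ((Tsq Y) m.+1 x) ((Tsq Y) m x) ((Tsq Y) n x).
  have := hD m x; have := h x; lra.
have hcau : forall x, hcauchy ip (fun k => (Tsq Y) k x).
  move=> x e e0.
  have eK : 0 < e / (hn x + 1) by rewrite divr_gt0 // ltr_wpDl // hnorm_ge0.
  have hup : forall n, wsq n <= 1 by move=> n; have := wsq_bd n => /andP [].
  case: (mono_cauchy2 wsq_inc hup eK) => N hN; exists N => m n hm hn0.
  have hx := hnorm_ge0 x.
  have hw := hN m n hm hn0.
  have K1 : 0 < hn x + 1 by rewrite ltr_wpDl.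
  have hw' : `|wsq m - wsq n| * (hn x + 1) < e by rewrite -ltr_pdivlMr.
  case: (leqP n m) => hnm.
    have := hTel n m x hnm; have := ler_norm (wsq m - wsq n); nra.
  have := hTel m n x (ltnW hnm); rewrite hnormB_sym.
  rewrite distrC in hw'; have := ler_norm (wsq n - wsq m); nra.
pose T x := hlim (fun k => (Tsq Y) k x).
have hcvg : forall x, cvg_to (fun k => (Tsq Y) k x) (T x) by move=> x; apply: cauchy_cvg.
exists T; split; first exact: (lim_lin hlT hcvg).
split; first exact: (lim_sadj hsT hcvg).
split; first exact: (lim_bnd hwT hcvg).
split.
  move=> x.
  have hTT : cvg_to (fun k => (Tsq Y) k ((Tsq Y) k x)) (T (T x)).
    move=> e e0.
    have e2 : 0 < e / 2%:R by rewrite divr_gt0 // ltr0n.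
    case: (hcvg x _ e2) => N1 h1; case: (hcvg (T x) _ e2) => N2 h2.
    exists (maxn N1 N2) => n hn0.
    have := hnormB3 ((Tsq Y) n ((Tsq Y) n x)) ((Tsq Y) n (T x)) (T (T x)).
    rewrite -(linB (hlT n)).
    have := hwT n ((Tsq Y) n x - T x); rewrite mul1r.
    have := h1 n (leq_trans (leq_maxl _ _) hn0); have := h2 n (leq_trans (leq_maxr _ _) hn0).
    lra.
  have h1 : cvg_to (fun k => (Tsq Y) k.+1 x) (T x) by apply: cvg_sub (hcvg x) _ => n; apply: leqnSn.
  have h2 : cvg_to (fun k => (Tsq Y) k.+1 x) (hf *: (Y x + T (T x))).
    apply: cvg_ext (cvgZ hf (cvgD (cvg_const (Y x)) hTT)) => n.
    by rewrite TsS.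
  by have e := cvg_unique h1 h2; rewrite {1 2}e hf_add.
move=> C c hlC hbC hCY x.
apply: (lim_comm hlC hbC _ hcvg x).
elim=> [|k IH] v /=; first exact: (lin0 hlC).
by rewrite (linZ hlC) (linD hlC) hCY IH IH.
Qed.

Definition comm (C X : H -> H) := forall x, C (X x) = X (C x).

Lemma cl_eq (G1 G2 : H -> H) c1 c2 (u : nat -> H) a : lin G1 -> lin G2 ->
  bnd G1 c1 -> bnd G2 c2 -> cvg_to u a -> (forall n, G1 (u n) = G2 (u n)) -> G1 a = G2 a.
Proof.
move=> l1 l2 b1 b2 hu he.
apply: (cvg_unique (cvg_op b1 (linB l1) hu)).
by apply: cvg_ext (cvg_op b2 (linB l2) hu) => n; rewrite he.
Qed.

Lemma adj_nn T T' : is_adjoint ip T T' -> (forall x, T' (T x) = x) ->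
  forall x, hn (T x) = hn x.
Proof. by move=> h h' x; rewrite !hnormE /nn h h'. Qed.

Lemma bnd_of_eq T : (forall x, hn (T x) = hn x) -> bnd T 1.
Proof. by move=> h x; rewrite h mul1r. Qed.

Lemma sadj_lin T : sadj T -> lin T.
Proof. exact: adj_lin. Qed.

Lemma hn_i v : hn ('i%C *: v) = hn v.
Proof. by rewrite hnormZ /= expr0n expr1n add0r sqrtr1 mul1r. Qed.

Definition third : R[i] := ((3 : R)^-1)%:C.

Lemma hn_third (v : H) : hn (third *: v) = hn v / 3.
Proof. by rewrite hnormZr ger0_norm ?invr_ge0 ?ler0n // mulrC. Qed.

Lemma third_neq0 : third != 0.
Proof.
rewrite /third; apply/negP => /eqP h.
have : ((3 : R)^-1) = 0 by move: h; case.
by apply/eqP; rewrite invr_eq0 pnatr_eq0.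
Qed.

Lemma scale_third_eq0 (v : H) : third *: v = 0 -> v = 0.
Proof. by move/eqP; rewrite scaler_eq0 (negbTE third_neq0) /= => /eqP. Qed.

Lemma hf_eq0 (v : H) : hf *: v = 0 -> v = 0.
Proof.
move/eqP; rewrite scaler_eq0 => /orP [/eqP h|/eqP //].
have : ((2 : R)^-1) = 0 by move: h; case.
by move/eqP; rewrite invr_eq0 pnatr_eq0.
Qed.


Lemma lin_sub A B : lin A -> lin B -> lin (fun x => A x - B x).
Proof. by move=> hA hB a x y; rewrite hA hB scalerBr opprD addrACA. Qed.

Lemma sadj_add A B : sadj A -> sadj B -> sadj (fun x => A x + B x).
Proof. by move=> hA hB x y; rewrite ipDl ipDr hA hB. Qed.

Lemma sadj_sub A B : sadj A -> sadj B -> sadj (fun x => A x - B x).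
Proof. by move=> hA hB x y; rewrite ipBl ipBr hA hB. Qed.

Lemma sadj_id : sadj id.
Proof. by []. Qed.

Lemma bnd_add A B a b : bnd A a -> bnd B b -> bnd (fun x => A x + B x) (a + b).
Proof.
move=> hA hB x; apply: le_trans (hnormD _ _) _; rewrite mulrDl.
exact: lerD.
Qed.

Lemma bnd_sub A B a b : bnd A a -> bnd B b -> bnd (fun x => A x - B x) (a + b).
Proof.
move=> hA hB x; apply: le_trans (hnormD _ _) _; rewrite mulrDl hnormN.
exact: lerD.
Qed.

Lemma bnd_comp A B a b : 0 <= a -> bnd A a -> bnd B b -> bnd (A \o B) (a * b).
Proof.
move=> a0 hA hB x /=; apply: le_trans (hA _) _; rewrite -mulrA.
exact: ler_wpM2l.
Qed.

Lemma bnd_zero : bnd (fun _ => 0) 0.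
Proof. by move=> x; rewrite hnorm0 mul0r. Qed.

Lemma bnd_id : bnd id 1.
Proof. by move=> x; rewrite mul1r. Qed.

Lemma bnd_i A a : bnd A a -> bnd (fun x => 'i%C *: A x) a.
Proof. by move=> h x; rewrite hn_i. Qed.

Lemma adj_kill F X : sadj F -> sadj X -> (forall x, X (F x) = 0) ->
  forall x, F (X x) = 0.
Proof.
move=> sF sX XF x; apply: ip_ext => z.
by rewrite ip0r -(sF z (X x)) -(sX (F z) x) XF ip0l.
Qed.

Lemma iconj (z : R[i]) : 'i%C * (- z) = conjc 'i%C * z.
Proof. by case: z => *; csolve. Qed.

Lemma ii (v : H) : 'i%C *: ('i%C *: v) = - v.
Proof. by rewrite scalerA -expr2 sqr_i scaleN1r. Qed.

Lemma hf2 (v : H) : hf *: (v + v) = v.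
Proof. by rewrite scalerDr hf_add. Qed.

Lemma lin_sum3 (G1 G2 : H -> H) : lin G1 -> lin G2 -> forall a b c,
  G1 a = G2 a -> G1 b = G2 b -> G1 c = G2 c -> G1 (a + b + c) = G2 (a + b + c).
Proof. by move=> l1 l2 a b c e1 e2 e3; rewrite !(linD l1) !(linD l2) e1 e2 e3. Qed.

Lemma sym_exists (M : (H -> H) -> Prop) (hM : is_von_neumann_algebra ip M)
  (U Ust W Wst : H -> H) :
  M W -> is_adjoint ip W Wst -> (forall x, Wst (W x) = x) -> (forall x, W (Wst x) = x) ->
  is_adjoint ip U Ust -> (forall x, Ust (U x) = x) -> (forall x, U (Ust x) = x) ->
  Ust = Wst \o U \o W ->
  exists S, [/\ M S, is_bounded_op ip S, sadj S, (forall x, S (S x) = x) &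
     (forall x, S (U x) = Ust (S x))].
Proof.
move=> MW aW WstW WWst aU UstU UUst hUst.
have aW' := adj_sym aW; have aU' := adj_sym aU.
have lW := adj_lin aW'; have lWst := adj_lin aW.
have lU := adj_lin aU'; have lUst := adj_lin aU.
have bW : bnd W 1 := bnd_of_eq (adj_nn aW WstW).
have bWst : bnd Wst 1 := bnd_of_eq (adj_nn aW' WWst).
have bU : bnd U 1 := bnd_of_eq (adj_nn aU UstU).
have bUst : bnd Ust 1 := bnd_of_eq (adj_nn aU' UUst).
have R1 : forall x, U (W x) = W (Ust x) by move=> x; rewrite hUst /= WWst.
have R2 : forall x, Wst (U x) = Ust (Wst x) by move=> x; rewrite hUst /= WWst.
have aX : is_adjoint ip Ust (Wst \o (Ust \o W)).
  by have := adj_comp (adj_comp aW' aU) aW; rewrite -hUst.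
have hU' : forall x, U x = Wst (Ust (W x)).
  by move=> x; rewrite (adj_unique aU' aX).
have R3 : forall x, W (U x) = Ust (W x) by move=> x; rewrite hU' WWst.
have R4 : forall x, U (Wst x) = Wst (Ust x) by move=> x; rewrite hU' WWst.
pose A x := hf *: (W x + Wst x).
have lA : lin A by apply: lin_scale; apply: lin_add.
have sA : sadj A.
  move=> x y; rewrite /A ipZl ipZr conjc_real ipDl ipDr aW aW' addrC.
  by [].
have bA : bnd A 1.
  move=> x; rewrite /A hn_hf; have := hnormD (W x) (Wst x).
  have := bW x; have := bWst x; lra.
have AU : forall x, A (U x) = Ust (A x).
  by move=> x; rewrite /A R3 R2 (linZ lUst) (linD lUst).
have UA : forall x, U (A x) = A (Ust x).
  by move=> x; rewrite /A (linZ lU) (linD lU) R1 R4.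
have AWc : forall C, lin C -> comm C W -> comm C Wst -> comm C A.
  by move=> C lC h1 h2 x; rewrite /A (linZ lC) (linD lC) h1 h2.
pose Y x := x - A (A x).
have lY : lin Y by move=> a x y; rewrite /Y !lA scalerBr opprD addrACA.
have sY : sadj Y by move=> x y; rewrite /Y ipBl ipBr !sA.
have bY : bnd Y 1.
  move=> x; rewrite mul1r; apply: nnle_hn.
  have := Zlem sA bA x; have := nn_ge0 (A x); rewrite /Y; lra.
have AYc : forall C, lin C -> comm C A -> comm C Y.
  by move=> C lC h x; rewrite /Y (linB lC) !h.
case: (sqrt_iter sY bY) => T0 [lT0 [sT0 [bT0 [eT0 cT0]]]].
pose N x := x - T0 x.
have lN : lin N by move=> a x y; rewrite /N lT0 scalerBr opprD addrACA.
have sN : sadj N by move=> x y; rewrite /N ipBl ipBr sT0.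
have bN : bnd N 2.
  move=> x; rewrite /N; have := hnormD x (- T0 x); rewrite hnormN.
  have := bT0 x; lra.
have NN : forall x, N (N x) = A (A x).
  by move=> x; rewrite /N (linB lT0); apply: zm1; apply: eT0.
have NYc : forall C c, lin C -> bnd C c -> comm C Y -> comm C N.
  by move=> C c lC bC h x; rewrite /N (linB lC) (cT0 C c lC bC h).

have cAN : comm A N := NYc A 1 lA bA (AYc A lA (fun _ => erefl)).
have cUY : comm U Y by move=> x; rewrite /Y (linB lU) UA -AU.
have cUstY : comm Ust Y by move=> x; rewrite /Y (linB lUst) -AU UA.
have cUN := NYc U 1 lU bU cUY.
have cUstN := NYc Ust 1 lUst bUst cUstY.
pose Np x := N x + A x.
pose Nm x := N x - A x.
have lNp : lin Np := lin_add lN lA.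
have lNm : lin Nm := lin_sub lN lA.
have sNp : sadj Np := sadj_add sN sA.
have sNm : sadj Nm := sadj_sub sN sA.
have bNp : bnd Np 3.
  by have := bnd_add bN bA; rewrite (_ : 2 + 1 = 3) //; lra.
have bNm : bnd Nm 3.
  by have := bnd_sub bN bA; rewrite (_ : 2 + 1 = 3) //; lra.
have NmNp : forall x, Nm (Np x) = 0.
  by move=> x; rewrite /Nm /Np (linD lN) (linD lA) NN cAN (addrC (N (A x))) subrr.
have NpNm : forall x, Np (Nm x) = 0.
  by move=> x; rewrite /Nm /Np (linB lN) (linB lA) NN cAN subrKA subrr.
have Bpdef : forall B X, sadj X -> bnd X 3 -> B = (fun x => third *: X x) -> sadj B /\ bnd B 1.
  move=> B X sX bX ->; split.
    by move=> x y; rewrite ipZl ipZr conjc_real sX.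
  by move=> x; rewrite hn_third; have := bX x; lra.
pose Bp x := third *: Np x.
pose Bm x := third *: Nm x.
case: (Bpdef Bp Np sNp bNp erefl) => sBp bBp.
case: (Bpdef Bm Nm sNm bNm erefl) => sBm bBm.
case: (kerproj sBp bBp) => Fp [lFp [sFp [bFp [BFp [kFp [rFp cFp]]]]]].
case: (kerproj sBm bBm) => Fm [lFm [sFm [bFm [BFm [kFm [rFm cFm]]]]]].
have NpFp : forall x, Np (Fp x) = 0 by move=> x; apply: scale_third_eq0; apply: BFp.
have NmFm : forall x, Nm (Fm x) = 0 by move=> x; apply: scale_third_eq0; apply: BFm.
have kFp' : forall v, Np v = 0 -> Fp v = v by move=> v h; apply: kFp; rewrite /Bp h scaler0.
have kFm' : forall v, Nm v = 0 -> Fm v = v by move=> v h; apply: kFm; rewrite /Bm h scaler0.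
have FpNp : forall x, Fp (Np x) = 0 := adj_kill sFp sNp NpFp.
have FmNm : forall x, Fm (Nm x) = 0 := adj_kill sFm sNm NmFm.
pose P x := x - Fp x.
pose Q x := x - Fm x.
have lP : lin P := lin_sub lin_id lFp.
have lQ : lin Q := lin_sub lin_id lFm.
have sP : sadj P := sadj_sub sadj_id sFp.
have sQ : sadj Q := sadj_sub sadj_id sFm.
have bP : bnd P 2 by have := bnd_sub bnd_id bFp; rewrite (_ : 1 + 1 = 2) //; lra.
have bQ : bnd Q 2 by have := bnd_sub bnd_id bFm; rewrite (_ : 1 + 1 = 2) //; lra.
have QNp : forall x, Q (Np x) = 0 by move=> x; rewrite /Q kFm' ?subrr.
have PNm : forall x, P (Nm x) = 0 by move=> x; rewrite /P kFp' ?subrr.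
have PNp : forall x, P (Np x) = Np x by move=> x; rewrite /P FpNp subr0.
have QNm : forall x, Q (Nm x) = Nm x by move=> x; rewrite /Q FmNm subr0.
have clP : forall G1 G2 c1 c2, lin G1 -> lin G2 -> bnd G1 c1 -> bnd G2 c2 ->
    (forall v, G1 (Np v) = G2 (Np v)) -> forall x, G1 (P x) = G2 (P x).
  move=> G1 G2 c1 c2 l1 l2 b1 b2 h x.
  case: (rFp x) => y hy.
  apply: (cl_eq l1 l2 b1 b2 hy) => n.
  by rewrite /Bp (linZ l1) (linZ l2) h.
have clQ : forall G1 G2 c1 c2, lin G1 -> lin G2 -> bnd G1 c1 -> bnd G2 c2 ->
    (forall v, G1 (Nm v) = G2 (Nm v)) -> forall x, G1 (Q x) = G2 (Q x).
  move=> G1 G2 c1 c2 l1 l2 b1 b2 h x.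
  case: (rFm x) => y hy.
  apply: (cl_eq l1 l2 b1 b2 hy) => n.
  by rewrite /Bm (linZ l1) (linZ l2) h.
have PQ : forall x, P (Q x) = 0.
  by apply: (clQ P (fun _ => 0) 2 0 lP lin_zero bP bnd_zero).
have QP : forall x, Q (P x) = 0.
  by apply: (clP Q (fun _ => 0) 2 0 lQ lin_zero bQ bnd_zero).
have NpQ : forall x, Np (Q x) = 0.
  by apply: (clQ Np (fun _ => 0) 3 0 lNp lin_zero bNp bnd_zero).
have NmP : forall x, Nm (P x) = 0.
  by apply: (clP Nm (fun _ => 0) 3 0 lNm lin_zero bNm bnd_zero).
have PP : forall x, P (P x) = P x.
  move=> x; have e : Fp (P x) = 0 by rewrite /P (linB lFp) (kFp' _ (NpFp x)) subrr.
  by transitivity (P x - Fp (P x)); [by [] | rewrite e subr0].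
have QQ : forall x, Q (Q x) = Q x.
  move=> x; have e : Fm (Q x) = 0 by rewrite /Q (linB lFm) (kFm' _ (NmFm x)) subrr.
  by transitivity (Q x - Fm (Q x)); [by [] | rewrite e subr0].
pose F0 x := x - P x - Q x.
have lF0 : lin F0 := lin_sub (lin_sub lin_id lP) lQ.
have sF0 : sadj F0 := sadj_sub (sadj_sub sadj_id sP) sQ.
have bF0 : bnd F0 5.
  by have := bnd_sub (bnd_sub bnd_id bP) bQ; rewrite (_ : 1 + 2 + 2 = 5) //; lra.
have NpF0 : forall x, Np (F0 x) = 0.
  by move=> x; rewrite /F0 /P zm6 (linB lNp) NpFp NpQ subrr.
have NmF0 : forall x, Nm (F0 x) = 0.
  by move=> x; rewrite /F0 /Q zm2 (linB lNm) NmFm NmP subrr.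
have Aker : forall v, Np v = 0 -> Nm v = 0 -> A v = 0.
  by move=> v h1 h2; rewrite -(hf2 (A v)) -(zm3 (N v)) -/(Np v) -/(Nm v) h1 h2 subrr scaler0.
have Nker : forall v, Np v = 0 -> Nm v = 0 -> N v = 0.
  by move=> v h1 h2; rewrite -(hf2 (N v)) -(zm3' (N v) (A v)) -/(Np v) -/(Nm v) h1 h2 addr0 scaler0.
have AF0 : forall x, A (F0 x) = 0 by move=> x; apply: Aker.
have NF0 : forall x, N (F0 x) = 0 by move=> x; apply: Nker.
have PF0 : forall x, P (F0 x) = 0.
  by move=> x; rewrite /F0 (linB lP (x - P x)) (linB lP x) PP PQ subrr subr0.
have QF0 : forall x, Q (F0 x) = 0.
  by move=> x; rewrite /F0 (linB lQ (x - P x)) (linB lQ x) QP QQ subr0 subrr.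
have WstA0 : forall v, A v = 0 -> Wst v = - W v.
  move=> v /hf_eq0 /eqP; rewrite addr_eq0 => /eqP ->; by rewrite opprK.
have chain : forall C c, lin C -> bnd C c -> comm C W -> comm C Wst ->
    [/\ comm C P, comm C Q & comm C F0].
  move=> C c lC bC h1 h2.
  have hA := AWc C lC h1 h2.
  have hN := NYc C c lC bC (AYc C lC hA).
  have hBp : forall x, C (Bp x) = Bp (C x).
    by move=> x; rewrite /Bp /Np (linZ lC) (linD lC) hA hN.
  have hBm : forall x, C (Bm x) = Bm (C x).
    by move=> x; rewrite /Bm /Nm (linZ lC) (linB lC) hA hN.
  have hFp := cFp C c lC bC hBp.
  have hFm := cFm C c lC bC hBm.
  have hP : comm C P by move=> x; rewrite /P (linB lC) hFp.
  have hQ : comm C Q by move=> x; rewrite /Q (linB lC) hFm.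
  split => // x; by rewrite /F0 (linB lC (x - P x)) (linB lC x) hP hQ.
have cWWst : comm W Wst by move=> x; rewrite WWst WstW.
have WstW' : comm Wst W by move=> x; rewrite WWst WstW.
case: (chain W 1 lW bW (fun _ => erefl) cWWst) => cWP cWQ cWF0.
case: (chain Wst 1 lWst bWst WstW' (fun _ => erefl)) => _ _ cWstF0.
pose S x := P x - Q x + 'i%C *: W (F0 x).
have lS : lin S := lin_add (lin_sub lP lQ) (lin_scale _ (lin_comp lW lF0)).
have bS : bnd S (2 + 2 + 1 * 5).
  exact: (bnd_add (bnd_sub bP bQ) (bnd_i (bnd_comp ler01 bW bF0))).
have SNp : forall v, P v = v -> Q v = 0 -> S v = v.
  move=> v h1 h2; rewrite /S h1 h2 subr0.
  by rewrite (_ : F0 v = 0) ?(lin0 lW) ?scaler0 ?addr0 // /F0 h1 h2 subrr subr0.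
have SNm : forall v, P v = 0 -> Q v = v -> S v = - v.
  move=> v h1 h2; rewrite /S h1 h2 sub0r.
  by rewrite (_ : F0 v = 0) ?(lin0 lW) ?scaler0 ?addr0 // /F0 h1 h2 subr0 subrr.
have SF0 : forall v, P v = 0 -> Q v = 0 -> S v = 'i%C *: W v.
  move=> v h1 h2; rewrite /S h1 h2 subrr add0r.
  by rewrite (_ : F0 v = v) // /F0 h1 h2 !subr0.

have cWstF0' : forall x, Wst (F0 x) = - W (F0 x) := fun x => WstA0 _ (AF0 x).
have sS : sadj S.
  move=> x y; rewrite /S ipDl ipBl ipZl ipDr ipBr ipZr sP sQ.
  congr (_ + _).
  by rewrite aW sF0 -cWstF0 cWstF0' ipNr iconj.
have SS : forall x, S (S x) = x.
  move=> x.
  have e1 : S (P x) = P x := SNp _ (PP x) (QP x).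
  have e2 : S (Q x) = - Q x := SNm _ (PQ x) (QQ x).
  have e3 : S (W (F0 x)) = 'i%C *: W (W (F0 x)).
    apply: SF0; first by rewrite -cWP PF0 (lin0 lW).
    by rewrite -cWQ QF0 (lin0 lW).
  have e4 : W (W (F0 x)) = - F0 x.
    have h : W (F0 x) = - Wst (F0 x) by rewrite cWstF0' opprK.
    by rewrite h (linN lW) WWst.
  have -> : S x = P x - Q x + 'i%C *: W (F0 x) by [].
  rewrite (linD lS (P x - Q x)) (linB lS (P x)) (linZ lS) e1 e2 e3 ii e4 !opprK.
  exact: zm4.
have eN : forall w, N w = hf *: (Np w + Nm w) by move=> w; rewrite /Np /Nm zm3' hf2.
have eA : forall w, A w = hf *: (Np w - Nm w) by move=> w; rewrite /Np /Nm zm3 hf2.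
have SNpw : forall w, S (Np w) = Np w := fun w => SNp _ (PNp w) (QNp w).
have SNmw : forall w, S (Nm w) = - Nm w := fun w => SNm _ (PNm w) (QNm w).
have SN : forall w, S (N w) = A w.
  by move=> w; rewrite eN (linZ lS) (linD lS) SNpw SNmw -eA.
have SA : forall w, S (A w) = N w.
  by move=> w; rewrite eA (linZ lS) (linB lS) SNpw SNmw opprK -eN.
have SUNp : forall v, S (U (Np v)) = Ust (S (Np v)).
  move=> v; rewrite SNpw /Np (linD lU) cUN UA (linD lS) SN SA AU -cUstN.
  by rewrite (linD lUst) addrC.
have SUNm : forall v, S (U (Nm v)) = Ust (S (Nm v)).
  move=> v; rewrite SNmw /Nm (linB lU) cUN UA (linB lS) SN SA AU -cUstN.
  by rewrite (linN lUst) (linB lUst (N v) (A v)) opprB.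
have l1 : lin (fun y => S (U y)) := lin_comp lS lU.
have l2 : lin (fun y => Ust (S y)) := lin_comp lUst lS.
have b1 : bnd (fun y => S (U y)) ((2 + 2 + 1 * 5) * 1).
  by apply: (bnd_comp _ bS bU); lra.
have b2 : bnd (fun y => Ust (S y)) (1 * (2 + 2 + 1 * 5)).
  by apply: (bnd_comp ler01 bUst bS).
have SU : forall x, S (U x) = Ust (S x).
  move=> x.
  have e1 : S (U (P x)) = Ust (S (P x)) := clP _ _ _ _ l1 l2 b1 b2 SUNp x.
  have e2 : S (U (Q x)) = Ust (S (Q x)) := clQ _ _ _ _ l1 l2 b1 b2 SUNm x.
  have e3 : S (U (F0 x)) = Ust (S (F0 x)).
    have hNU : N (U (F0 x)) = 0 by rewrite -cUN NF0 (lin0 lU).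
    have hAU : A (U (F0 x)) = 0 by rewrite AU AF0 (lin0 lUst).
    have hNp : Np (U (F0 x)) = 0 by rewrite /Np hNU hAU addr0.
    have hNm : Nm (U (F0 x)) = 0 by rewrite /Nm hNU hAU subr0.
    have hP : P (U (F0 x)) = 0 by rewrite /P kFp' ?subrr.
    have hQ : Q (U (F0 x)) = 0 by rewrite /Q kFm' ?subrr.
    rewrite (SF0 _ hP hQ) (SF0 _ (PF0 x) (QF0 x)) (linZ lUst).
    by rewrite R3.
  have ex : P x + Q x + F0 x = x by apply: zm4.
  by have := lin_sum3 l1 l2 e1 e2 e3; rewrite /= ex.
have MWst : M Wst.
  case: (proj1 hM W MW) => _ [T' [aT' MT']].
  by rewrite (adj_unique aW aT').
exists S; split => //.
- apply: (proj2 (proj2 hM S)); split.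
    by split; [exact: lS | exists (2 + 2 + 1 * 5); exact: bS].
  move=> T [[lT [c bT]] hT].
  have cTW : comm T W by move=> x; exact: (congr1 (fun f => f x) (hT W MW)).
  have cTWst : comm T Wst by move=> x; exact: (congr1 (fun f => f x) (hT Wst MWst)).
  case: (chain T c lT bT cTW cTWst) => cTP cTQ cTF0.
  apply: functional_extensionality => x /=.
  rewrite /S (linD lT (P x - Q x)) (linB lT (P x)) (linZ lT) cTP cTQ cTW cTF0.
  by [].
- by split; [exact: lS | exists (2 + 2 + 1 * 5); exact: bS].
Qed.

Lemma final_main (M : (H -> H) -> Prop) (hM : is_von_neumann_algebra ip M)
    (U Ustar : H -> H) (hUM : M U) (hU : op_unitary ip U)
    (hUstar : is_adjoint ip U Ustar) :
  (exists S1 S2 : H -> H,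
      [/\ M S1, M S2, op_symmetry ip S1, op_symmetry ip S2 & U = S1 \o S2])
  <->
  (exists W : H -> H,
      [/\ M W, op_unitary ip W &
          exists Wstar : H -> H, is_adjoint ip W Wstar /\ Ustar = Wstar \o U \o W]).
Proof.
case: hU => [hUb [U' [aU' [g1 g2]]]].
have eU' : U' = Ustar := adj_unique aU' hUstar.
subst U'.
split.
- case=> S1 [S2 [MS1 MS2 [hU1 aS1] [hU2 aS2] eU]].
  exists S1; split => //.
  exists S1; split => //.
  case: hU1 => [_ [S' [aS' [h1 _]]]].
  have eS' : S' = S1 := adj_unique aS' aS1.
  subst S'.
  have eUs : Ustar = S2 \o S1.
    apply: (adj_unique hUstar); rewrite eU; exact: adj_comp aS1 aS2.
  rewrite eUs eU; apply: functional_extensionality => x /=.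
  by have := congr1 (fun f => f (S2 (S1 x))) h1.
- case=> W [MW [hWb [W' [aW' [h1 h2]]]] [Wstar [aWs eUs]]].
  have eW' : W' = Wstar := adj_unique aW' aWs.
  subst W'.
  have WstW : forall x, Wstar (W x) = x by move=> x; exact: (congr1 (fun f => f x) h1).
  have WWst : forall x, W (Wstar x) = x by move=> x; exact: (congr1 (fun f => f x) h2).
  have UstU : forall x, Ustar (U x) = x by move=> x; exact: (congr1 (fun f => f x) g1).
  have UUst : forall x, U (Ustar x) = x by move=> x; exact: (congr1 (fun f => f x) g2).
  case: (sym_exists hM MW aWs WstW WWst hUstar UstU UUst eUs) => S [MS bS sS SS SU].
  have hnU : forall x, hn (U x) = hn x := adj_nn hUstar UstU.
  have lU : lin U := adj_lin (adj_sym hUstar).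
  have MSU : M (S \o U).
    apply: (proj2 (proj2 hM _)); split.
      case: bS => lS [c hc]; split; first exact: lin_comp lS lU.
      by exists c => x /=; rewrite -(hnU x); apply: hc.
    move=> T hT.
    have e1 : S \o T = T \o S by have := (proj1 (proj2 hM S) MS).2 T hT.
    have e2 : U \o T = T \o U by have := (proj1 (proj2 hM U) hUM).2 T hT.
    apply: functional_extensionality => x /=.
    have := congr1 (fun f => f x) e2; rewrite /= => ->.
    by have := congr1 (fun f => f (U x)) e1.
  have SS' : S \o S = id by apply: functional_extensionality => x; apply: SS.
  exists S, (S \o U); split => //.
  + split => //; split => //; exists S; split => //.
  + split; last first.
      move=> x y /=; rewrite sS hUstar -SU //.
    split.
      case: bS => lS [c hc]; split; first exact: lin_comp lS lU.
      by exists c => x /=; rewrite -(hnU x); apply: hc.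
    exists (S \o U); split.
      move=> x y /=; rewrite sS hUstar -SU //.
    split; apply: functional_extensionality => x /=;
      by rewrite SU SS UstU.
  + by apply: functional_extensionality => x /=; rewrite SS.
Qed.

End Hilb.

Theorem proposition4p1 (R : realType) (H : lmodType R[i])
    (ip : H -> H -> R[i]) (M : (H -> H) -> Prop)
    (hH : is_hilbert_space ip) (hM : is_von_neumann_algebra ip M)
    (U Ustar : H -> H) (hUM : M U) (hU : op_unitary ip U)
    (hUstar : is_adjoint ip U Ustar) :
  (exists S1 S2 : H -> H,
      [/\ M S1, M S2, op_symmetry ip S1, op_symmetry ip S2 & U = S1 \o S2])
  <->
  (exists W : H -> H,
      [/\ M W, op_unitary ip W &
          exists Wstar : H -> H, is_adjoint ip W Wstar /\ Ustar = Wstar \o U \o W]).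
Proof. exact: (final_main hH hM hUM hU hUstar). Qed.
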